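(* Let $k$ be a field, $A,B$ abelian groups, $R$ an $A$-graded and $S$ a $B$-graded finite-dimensional Frobenius $k$-algebra with forms $\langle-,-\rangle_R,\langle-,-\rangle_S$, and $t:A\otimes B\to k^\times$ a bicharacter. Suppose there exist $\sigma_R\in A$, $\sigma_S\in B$ such that for homogeneous $r,r'\in R$, $\langle r,r'\rangle_R\neq0$ implies $|r|+|r'|+\sigma_R=0$, and for homogeneous $s,s'\in S$, $\langle s,s'\rangle_S\ne0$ implies $|s|+|s'|+\sigma_S=0$. Suppose further that the Nakayama automorphisms of $R$ and $S$ are diagonalisable. Then the Nakayama automorphism of $R\otimes^tS$, with respect to the form $\langle r\otimes s,r'\otimes s'\rangle=t(|r'|,|s|)\langle r,r'\rangle_R\langle s,s'\rangle_S$, is diagonalisable.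
   Context: $R\otimes^tS$ is $R\otimes S$ with product $(r\otimes s)(r'\otimes s')=t(|r'|,|s|)rr'\otimes ss'$ for homogeneous elements; $|\cdot|$ denotes degree. The Nakayama automorphism $\nu$ of a Frobenius algebra is defined by $\langle x,y\rangle=\langle y,\nu(x)\rangle$ for all $y$. *)

(* Defs.v *)
From HB Require Import structures.
From mathcomp Require Import all_boot all_order all_algebra falgebra.
Set Implicit Arguments. Unset Strict Implicit. Unset Printing Implicit Defensive.
Import GRing.Theory.
Local Open Scope ring_scope.

Definition graded_alg (k : fieldType) (A : zmodType) (R : falgType k)
    (G : A -> {vspace R}) : Prop :=
  [/\ (1 : R) \in G 0,
      (forall a b (x y : R), x \in G a -> y \in G b -> x * y \in G (a + b)),
      (forall (s : seq A) (v : A -> R), uniq s -> (forall a, v a \in G a) ->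
         \sum_(a <- s) v a = 0 -> forall a, a \in s -> v a = 0) &
      (exists s : seq A, (\sum_(a <- s) G a)%VS = fullv)].

Definition bilinear_form (k : fieldType) (V : vectType k) (F : V -> V -> k) :=
  (forall c x x' y, F (c *: x + x') y = c * F x y + F x' y) /\
  (forall c x y y', F x (c *: y + y') = c * F x y + F x y').

Definition nondegenerate (k : fieldType) (V : vectType k) (F : V -> V -> k) :=
  (forall x, (forall y, F x y = 0) -> x = 0) /\
  (forall y, (forall x, F x y = 0) -> y = 0).

Definition frobenius_form (k : fieldType) (R : falgType k) (F : R -> R -> k) :=
  [/\ bilinear_form F, nondegenerate F & forall x y z : R, F (x * y) z = F x (y * z)].

Definition nakayama (k : fieldType) (V : vectType k) (F : V -> V -> k)
    (nu : 'End(V)) := forall x y, F x y = F y (nu x).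

Definition diagonalisable (k : fieldType) (V : vectType k) (f : 'End(V)) :=
  exists X : seq V, basis_of fullv%VS X /\
    forall x, x \in X -> exists c : k, f x = c *: x.

Definition bicharacter (k : fieldType) (A B : zmodType) (t : A -> B -> k) :=
  [/\ forall a b, t a b != 0,
      forall a a' b, t (a + a') b = t a b * t a' b &
      forall a b b', t a (b + b') = t a b * t a b'].

(* Concrete model of R (x) S: coordinate matrices with respect to the fixed
   bases vbasis {:R}, vbasis {:S};  r (x) s := (r_i * s_j)_{i,j}. *)
Definition tensorT (k : fieldType) (R S : vectType k) :=
  'M[k]_(\dim {:R}%VS, \dim {:S}%VS).
Definition tens (k : fieldType) (R S : vectType k) (r : R) (s : S)
  : tensorT R S :=
  \matrix_(i, j) (coord (vbasis {:R}%VS) i r * coord (vbasis {:S}%VS) j s).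

(* Main.v *)
Require Import Defs.
From HB Require Import structures.
From mathcomp Require Import all_boot all_order all_algebra falgebra.
From mathcomp Require Import ring.
Local Open Scope ring_scope.
Import GRing.Theory.
Set Implicit Arguments. Unset Strict Implicit. Unset Printing Implicit Defensive.


Lemma seq_choice (T : eqType) (C : Type) (c0 : C) (P : T -> C -> Prop) (s : seq T) :
  (forall x, x \in s -> exists c, P x c) -> exists f : T -> C, forall x, x \in s -> P x (f x).
Proof.
elim: s => [|x s IH] H; first by exists (fun _ => c0).
have [c Hc] := H x (mem_head _ _).
have [f Hf] : exists f : T -> C, forall y, y \in s -> P y (f y).
  by apply: IH => y ys; apply: H; rewrite inE ys orbT.
exists (fun y => if y == x then c else f y) => y; rewrite inE.
by case: eqP => [->|_] //= /Hf.
Qed.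

Section Gen.
Variable k : fieldType.

Lemma span_ind (V : vectType k) (X : seq V) (P : V -> Prop) :
  (<<X>> = fullv)%VS -> P 0 -> (forall u v, P u -> P v -> P (u + v)) ->
  (forall c v, P v -> P (c *: v)) -> (forall x, x \in X -> P x) -> forall v, P v.
Proof.
move=> hX P0 PD PZ PX v.
have: v \in <<in_tuple X>>%VS by rewrite hX memvf.
move/coord_span => ->; apply: big_ind => // i _; apply: PZ; apply: PX.
by apply: mem_nth; rewrite (ltn_ord i).
Qed.

Lemma extract_basis (V : vectType k) (X : seq V) :
  exists Y, [/\ {subset Y <= X}, free Y & (<<Y>> = <<X>>)%VS].
Proof.
elim: X => [|x X [Y [sYX fY eY]]]; first by exists [::]; split => //; exact: nil_free.
case xY: (x \in <<Y>>%VS).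
  exists Y; split => //; first by move=> y /sYX; rewrite inE => ->; rewrite orbT.
  rewrite span_cons -eY; apply/esym/addv_idPr.
  by rewrite -memvE.
exists (x :: Y); split.
- by move=> y; rewrite !inE => /orP[->|/sYX ->] //; rewrite orbT.
- by rewrite free_cons xY fY.
- by rewrite !span_cons eY.
Qed.

Section BF.
Variables (V : vectType k) (F : V -> V -> k).
Hypothesis bF : bilinear_form F.

Lemma bfDl x x' y : F (x + x') y = F x y + F x' y.
Proof. by have := bF.1 1 x x' y; rewrite scale1r mul1r. Qed.
Lemma bfDr x y y' : F x (y + y') = F x y + F x y'.
Proof. by have := bF.2 1 x y y'; rewrite scale1r mul1r. Qed.
Lemma bf0l y : F 0 y = 0.
Proof. by apply/(addrI (F 0 y)); rewrite addr0 -bfDl addr0. Qed.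
Lemma bf0r x : F x 0 = 0.
Proof. by apply/(addrI (F x 0)); rewrite addr0 -bfDr addr0. Qed.
Lemma bfZl c x y : F (c *: x) y = c * F x y.
Proof. by have := bF.1 c x 0 y; rewrite addr0 bf0l addr0. Qed.
Lemma bfZr c x y : F x (c *: y) = c * F x y.
Proof. by have := bF.2 c x y 0; rewrite addr0 bf0r addr0. Qed.
Lemma bfBr x y y' : F x (y - y') = F x y - F x y'.
Proof. by rewrite bfDr -scaleN1r bfZr mulN1r. Qed.
Lemma bfsuml I (r : seq I) (P : pred I) (f : I -> V) y :
  F (\sum_(i <- r | P i) f i) y = \sum_(i <- r | P i) F (f i) y.
Proof. exact: (big_morph (fun x => F x y) (fun a b => bfDl a b y) (bf0l y)). Qed.
Lemma bfsumr I (r : seq I) (P : pred I) (f : I -> V) x :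
  F x (\sum_(i <- r | P i) f i) = \sum_(i <- r | P i) F x (f i).
Proof. exact: (big_morph (fun y => F x y) (fun a b => bfDr x a b) (bf0r x)). Qed.
End BF.

Section Tens.
Variables (R S : vectType k).
Lemma tensDl (r r' : R) (s : S) : tens (r + r') s = tens r s + tens r' s.
Proof. by apply/matrixP => i j; rewrite !mxE linearD /= mulrDl. Qed.
Lemma tensDr (r : R) (s s' : S) : tens r (s + s') = tens r s + tens r s'.
Proof. by apply/matrixP => i j; rewrite !mxE linearD /= mulrDr. Qed.
Lemma tensZl c (r : R) (s : S) : tens (c *: r) s = c *: tens r s.
Proof. by apply/matrixP => i j; rewrite !mxE linearZ /= mulrA. Qed.
Lemma tensZr c (r : R) (s : S) : tens r (c *: s) = c *: tens r s.
Proof. by apply/matrixP => i j; rewrite !mxE linearZ /= mulrCA. Qed.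
Lemma tens0r (s : S) : tens (0 : R) s = 0.
Proof. by apply/matrixP => i j; rewrite !mxE linear0 mul0r. Qed.
Lemma tensr0 (r : R) : tens r (0 : S) = 0.
Proof. by apply/matrixP => i j; rewrite !mxE linear0 mulr0. Qed.
End Tens.
End Gen.

Lemma cancel_deg (A : zmodType) (a c d sig : A) :
  a + d + sig = 0 -> d + c + sig = 0 -> a = c.
Proof.
move=> h1 h2; have : a + d + sig = d + c + sig by rewrite h1 h2.
by move/addIr; rewrite (addrC a) => /addrI.
Qed.

Section Graded.
Variables (k : fieldType) (A : zmodType) (R : falgType k) (G : A -> {vspace R})
  (FR : R -> R -> k) (sig : A) (nuR : 'End(R)).
Hypotheses (gG : graded_alg G) (fF : frobenius_form FR)
  (hF : forall a a' (r r' : R), r \in G a -> r' \in G a' -> FR r r' != 0 -> a + a' + sig = 0)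
  (nF : nakayama FR nuR).

Lemma grade_seq : exists s, uniq s /\ (\sum_(a <- s) G a)%VS = fullv.
Proof.
case: gG => _ _ _ [s0 hs0]; exists (undup s0); split; first exact: undup_uniq.
by rewrite big_undup //; exact: addvv.
Qed.

Lemma decomp_gen (s : seq A) : uniq s -> forall v, v \in (\sum_(a <- s) G a)%VS ->
  exists w : A -> R, (forall a, w a \in G a) /\ v = \sum_(a <- s) w a.
Proof.
elim: s => [|a s IH] /=.
  by move=> _ v; rewrite big_nil memv0 => /eqP ->; exists (fun _ => 0); split => [a|]; rewrite ?mem0v ?big_nil.
case/andP => aS us v; rewrite big_cons => /memv_addP [u uG [v' /(IH us) [w [wG ->]] ->]].
exists (fun b => if b == a then u else w b); split.
  by move=> b; case: eqP => [->|_].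
rewrite big_cons eqxx; congr (_ + _); apply: eq_big_seq => b bs.
by case: eqP => // eba; move: aS; rewrite -eba bs.
Qed.

Variables (s : seq A) (us : uniq s) (hs : (\sum_(a <- s) G a)%VS = fullv).

Lemma decomp v : exists w : A -> R, (forall a, w a \in G a) /\ v = \sum_(a <- s) w a.
Proof. by apply: decomp_gen => //; rewrite hs memvf. Qed.

Lemma nu_grade x a : x \in G a -> nuR x \in G a.
Proof.
case: fF => bF [ndl ndr] _ xa.
have [w [wG ew]] := decomp (nuR x).
suff w0 : forall c, c \in s -> c != a -> w c = 0.
  rewrite ew big_seq; apply: memv_suml => c cs.
  by case: (eqVneq c a) => [->|ca]; [exact: wG | rewrite w0 // mem0v].
move=> c cs ca; apply: ndr => y.
have [yd [ydG ->]] := decomp y.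
rewrite bfsuml //; apply: big1 => d _.
set y0 := yd d; have hy0 : y0 \in G d by exact: ydG.
case: (eqVneq (FR y0 (w c)) 0) => // hne.
have hd := hF hy0 (wG c) hne.
have : FR x y0 = FR y0 (w c).
  rewrite nF ew bfsumr // (bigD1_seq c) //= big1 ?addr0 // => e ec.
  case: (eqVneq (FR y0 (w e)) 0) => // h.
  have he := hF hy0 (wG e) h.
  exfalso; move/eqP: ec; apply; apply: (cancel_deg (d := d) (sig := sig)) => //; by rewrite (addrC e d).
move=> eq; rewrite -eq in hne.
have ha := hF xa hy0 hne.
exfalso; move/eqP: ca; apply; apply/esym; exact: cancel_deg ha hd.
Qed.

Lemma eig_comp x l (w : A -> R) : nuR x = l *: x -> (forall a, w a \in G a) ->
  x = \sum_(a <- s) w a -> forall a, a \in s -> nuR (w a) = l *: w a.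
Proof.
move=> hx wG ex a aS; apply/eqP; rewrite -subr_eq0; apply/eqP.
case: gG => _ _ dir _.
apply: (dir s (fun b => nuR (w b) - l *: w b)) => //.
  by move=> b; apply: memvB; [apply: nu_grade | apply: memvZ].
by rewrite sumrB -scaler_sumr -linear_sum /= -ex hx subrr.
Qed.

End Graded.

Lemma homog_eigbasis (k : fieldType) (A : zmodType) (R : falgType k) (G : A -> {vspace R})
  (FR : R -> R -> k) (sig : A) (nuR : 'End(R)) :
  graded_alg G -> frobenius_form FR ->
  (forall a a' (r r' : R), r \in G a -> r' \in G a' -> FR r r' != 0 -> a + a' + sig = 0) ->
  nakayama FR nuR -> diagonalisable nuR ->
  exists X : seq R, [/\ free X, (<<X>> = fullv)%VS &
     forall x, x \in X -> exists a l, x \in G a /\ nuR x = l *: x].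
Proof.
move=> gG fF hF nF [X0 [bX0 eX0]].
case/andP: bX0 => /eqP sX0 fX0.
have [s [us hs]] := grade_seq gG.
have [W HW] : exists W : R -> A -> R, forall x, x \in X0 ->
    (forall a, W x a \in G a) /\ x = \sum_(a <- s) W x a.
  apply: (@seq_choice _ _ (fun _ => 0) (fun x W => (forall a, W a \in G a) /\ x = \sum_(a <- s) W a) X0).
  by move=> x _; exact: decomp.
pose L := [seq W x a | x <- X0, a <- s].
have sL : (<<L>> = fullv)%VS.
  apply/eqP; rewrite eqEsubv subvf /= -sX0; apply/span_subvP => x xX0.
  have [_ ->] := HW x xX0; rewrite big_seq; apply: memv_suml => a aS.
  by apply: memv_span; exact: allpairs_f.
have [Y [sYL fY eY]] := extract_basis L.
exists Y; split => //; first by rewrite eY sL.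
move=> y /sYL /allpairsP [[x a] /= [xX0 aS ->]].
exists a; have [l hl] := eX0 x xX0; exists l.
have [wG ex] := HW x xX0; split; first exact: wG.
exact: (eig_comp gG fF hF nF us hs hl wG ex aS).
Qed.

Definition diagf (k : fieldType) (V : vectType k) (Y : seq V) (c : V -> k) (z : V) : V :=
  \sum_(i < size Y) (c Y`_i * coord (in_tuple Y) i z) *: Y`_i.

Lemma diagf_lin (k : fieldType) (V : vectType k) (Y : seq V) (c : V -> k) :
  linear (diagf Y c).
Proof.
move=> a u v; rewrite /diagf scaler_sumr -big_split; apply: eq_bigr => i _ /=.
by rewrite linearD linearZ /= mulrDr scalerDl scalerA mulrCA.
Qed.

HB.instance Definition _ (k : fieldType) (V : vectType k) (Y : seq V) (c : V -> k) :=
  GRing.isLinear.Build k V V *:%R (diagf Y c) (diagf_lin Y c).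

Lemma diagf_free (k : fieldType) (V : vectType k) (Y : seq V) (c : V -> k) v :
  free Y -> v \in Y -> diagf Y c v = c v *: v.
Proof.
move=> fY vY; have iv : (index v Y < size Y)%N by rewrite index_mem.
have ev : v = (in_tuple Y)`_(Ordinal iv) by rewrite /= nth_index.
rewrite /diagf {1}ev; rewrite (bigD1 (Ordinal iv)) //= big1 ?addr0.
  by move: (coord_free (X := in_tuple Y) (Ordinal iv) (Ordinal iv) fY) => /= ->; rewrite eqxx mulr1 nth_index.
by move=> i ne; move: (coord_free (X := in_tuple Y) (Ordinal iv) i fY) => /= ->; rewrite eq_sym (negPf ne) mulr0 scale0r.
Qed.

Lemma free_coef (k : fieldType) (V : vectType k) (X : seq V) (f : V -> k) :
  free X -> \sum_(x <- X) f x *: x = 0 -> forall x, x \in X -> f x = 0.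
Proof.
move=> /(freeP (X := in_tuple X)) fr hs x xX.
rewrite (big_nth 0) big_mkord in hs.
have iv : (index x X < size X)%N by rewrite index_mem.
have := fr (fun i => f X`_i) hs (Ordinal iv).
by rewrite /= nth_index.
Qed.

Section Bich.
Variables (k : fieldType) (A B : zmodType) (t : A -> B -> k).
Hypothesis bt : bicharacter t.
Lemma t0l b : t 0 b = 1.
Proof.
case: bt => nz tl _; have := tl 0 0 b; rewrite addr0 => h.
by apply: (mulIf (nz 0 b)); rewrite mul1r -h.
Qed.
Lemma t0r a : t a 0 = 1.
Proof.
case: bt => nz _ tr; have := tr a 0 0; rewrite addr0 => h.
by apply: (mulIf (nz a 0)); rewrite mul1r -h.
Qed.
Lemma tinvl a a' s b : a' + a + s = 0 -> t a' b = (t a b * t s b)^-1.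
Proof.
case: bt => nz tl _ ha.
have h : t a' b * (t a b * t s b) = 1 by rewrite -!tl addrA ha t0l.
have P0 : t a b * t s b != 0 by rewrite mulf_neq0.
by rewrite -[LHS]mulr1 -(divff P0) mulrA h mul1r.
Qed.
Lemma tinvr a b b' s : b' + b + s = 0 -> t a b' = (t a b * t a s)^-1.
Proof.
case: bt => nz _ tr ha.
have h : t a b' * (t a b * t a s) = 1 by rewrite -!tr addrA ha t0r.
have P0 : t a b * t a s != 0 by rewrite mulf_neq0.
by rewrite -[LHS]mulr1 -(divff P0) mulrA h mul1r.
Qed.
End Bich.

Section Tensor.
Variables (k : fieldType) (A B : zmodType)
  (R S : falgType k) (GR : A -> {vspace R}) (GS : B -> {vspace S})
  (FR : R -> R -> k) (FS : S -> S -> k) (t : A -> B -> k)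
  (sigR : A) (sigS : B) (nuR : 'End(R)) (nuS : 'End(S)).
Hypotheses (fR : frobenius_form FR) (fS : frobenius_form FS) (bt : bicharacter t)
  (hR : forall a a' (r r' : R), r \in GR a -> r' \in GR a' ->
     FR r r' != 0 -> a + a' + sigR = 0)
  (hS : forall b b' (s s' : S), s \in GS b -> s' \in GS b' ->
     FS s s' != 0 -> b + b' + sigS = 0)
  (nR : nakayama FR nuR) (nS : nakayama FS nuS).
Variables (F : tensorT R S -> tensorT R S -> k).
Hypotheses (bF : bilinear_form F)
  (hF : forall a a' b b' (r r' : R) (s s' : S),
     r \in GR a -> r' \in GR a' -> s \in GS b -> s' \in GS b' ->
     F (tens r s) (tens r' s') = t a' b * FR r r' * FS s s').
Variables (XR : seq R) (XS : seq S).
Hypotheses (fXR : free XR) (sXR : (<<XR>> = fullv)%VS)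
  (hXR : forall x, x \in XR -> exists a l, x \in GR a /\ nuR x = l *: x)
  (fXS : free XS) (sXS : (<<XS>> = fullv)%VS)
  (hXS : forall x, x \in XS -> exists a l, x \in GS a /\ nuS x = l *: x).

Let T := [seq tens x y | x <- XR, y <- XS].

Lemma tens_span : (<<T>> = fullv)%VS.
Proof.
have hT : forall r s, tens r s \in <<T>>%VS.
  apply: (span_ind (P := fun r => forall s, tens r s \in <<T>>%VS) sXR).
  - by move=> s; rewrite tens0r mem0v.
  - by move=> u v hu hv s; rewrite tensDl memvD.
  - by move=> c v hv s; rewrite tensZl memvZ.
  move=> x xX.
  apply: (span_ind (P := fun s => tens x s \in <<T>>%VS) sXS).
  - by rewrite tensr0 mem0v.
  - by move=> u v hu hv; rewrite tensDr memvD.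
  - by move=> c v hv; rewrite tensZr memvZ.
  by move=> y yX; apply: memv_span; apply: allpairs_f.
apply/eqP; rewrite eqEsubv subvf /=; apply/subvP => M _.
rewrite (matrix_sum_delta M); apply: memv_suml => i _; apply: memv_suml => j _.
apply: memvZ.
have -> : delta_mx i j = tens (vbasis {:R}%VS)`_i (vbasis {:S}%VS)`_j.
  apply/matrixP => i' j'; rewrite !mxE.
  rewrite (coord_free (X := vbasis {:R}%VS)) ?(basis_free (vbasisP _)) //.
  rewrite (coord_free (X := vbasis {:S}%VS)) ?(basis_free (vbasisP _)) //.
  by rewrite (eq_sym i') (eq_sym j'); case: (i == i'); case: (j == j'); rewrite ?mulr1 ?mulr0 ?mul0r.
exact: hT.
Qed.

Lemma gen_formula a a' b (r r' : R) (s s' : S) :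
  r \in GR a -> r' \in GR a' -> s \in GS b ->
  F (tens r s) (tens r' s') = t a' b * FR r r' * FS s s'.
Proof.
case: fS => bFS _ _.
move=> ra r'a sb; move: s'.
apply: (span_ind (P := fun s' => F (tens r s) (tens r' s') = t a' b * FR r r' * FS s s') sXS).
- by rewrite tensr0 bf0r // bf0r // mulr0.
- by move=> u v hu hv; rewrite tensDr !bfDr // hu hv mulrDr.
- by move=> c v hv; rewrite tensZr !bfZr // hv; ring.
move=> y /hXS [b' [l [yb _]]]; exact: hF ra r'a sb yb.
Qed.

Lemma eigen_tens x y : x \in XR -> y \in XS ->
  exists c, forall w, F (tens x y) w = F w (c *: tens x y).
Proof.
case: fR => bFR _ _; case: fS => bFS _ _.
move=> /hXR [a [l [xa hx]]] /hXS [b [m [yb hy]]].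
exists (l * m * t a sigS / t sigR b).
apply: (span_ind (P := fun w => F (tens x y) w = F w (_ *: tens x y)) tens_span).
- by rewrite bf0r // bf0l.
- by move=> u v hu hv; rewrite bfDr // bfDl // hu hv.
- by move=> c v hv; rewrite bfZr // bfZl // hv.
move=> w /allpairsP [[x' y'] /= [x'X y'X ->]].
have [a' [_ [x'a _]]] := hXR x'X; have [b' [_ [y'b _]]] := hXS y'X.
rewrite bfZr // (hF xa x'a yb y'b) (hF x'a xa y'b yb).
rewrite (nR x x') (nS y y') hx hy !bfZr //.
case: (eqVneq (FR x' x) 0) => [->|h1]; first by rewrite !(mulr0, mul0r).
case: (eqVneq (FS y' y) 0) => [->|h2]; first by rewrite !(mulr0, mul0r).
have ha := hR x'a xa h1; have hb := hS y'b yb h2.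
rewrite (tinvl bt b ha) (tinvr bt a hb).
case: bt => nz _ _.
have := nz a b; have := nz sigR b; have := nz a sigS => n1 n2 n3.
by field; rewrite ?n1 ?n2 ?n3 ?mulf_neq0.
Qed.

Lemma right_nondeg z : (forall w, F w z = 0) -> z = 0.
Proof.
case: fR => bFR [_ ndR] _; case: fS => bFS [_ ndS] _.
have uXR := free_uniq fXR.
have [u ->] : exists u : R -> S, z = \sum_(x <- XR) tens x (u x).
  move: z; apply: (span_ind (P := fun z => exists u : R -> S, z = \sum_(x <- XR) tens x (u x)) tens_span).
  - by exists (fun _ => 0); rewrite big1 // => x _; rewrite tensr0.
  - move=> v w [u1 ->] [u2 ->]; exists (fun x => u1 x + u2 x).
    by rewrite -big_split; apply: eq_bigr => x _; rewrite tensDr.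
  - move=> c v [u1 ->]; exists (fun x => c *: u1 x).
    by rewrite scaler_sumr; apply: eq_bigr => x _; rewrite tensZr.
  move=> w /allpairsP [[x y] /= [xX yX ->]].
  exists (fun x' => if x' == x then y else 0).
  rewrite (bigD1_seq x) //= eqxx big1 ?addr0 // => x' /negPf ->.
  by rewrite tensr0.
move=> hz.
have [dR HdR] : exists dR : R -> A, forall x, x \in XR -> x \in GR (dR x).
  apply: (@seq_choice _ _ 0 (fun x a => x \in GR a) XR) => x /hXR [a [_ [xa _]]].
  by exists a.
suff u0 : forall x, x \in XR -> u x = 0.
  by rewrite big_seq big1 // => x xX; rewrite u0 // tensr0.
move=> x0 x0X; apply: ndS.
apply: (span_ind (P := fun y' => FS y' (u x0) = 0) sXS).
- by rewrite bf0l.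
- by move=> v w hv hw; rewrite bfDl // hv hw addr0.
- by move=> c v hv; rewrite bfZl // hv mulr0.
move=> y' /hXS [b' [_ [y'b _]]].
pose Z := \sum_(x <- XR) (t (dR x) b' * FS y' (u x)) *: x.
have Z0 : Z = 0.
  apply: ndR.
  apply: (span_ind (P := fun x' => FR x' Z = 0) sXR).
  - by rewrite bf0l.
  - by move=> v w hv hw; rewrite bfDl // hv hw addr0.
  - by move=> c v hv; rewrite bfZl // hv mulr0.
  move=> x' /hXR [a' [_ [x'a _]]].
  have := hz (tens x' y'); rewrite bfsumr // => <-.
  rewrite /Z bfsumr // big_seq [RHS]big_seq; apply: eq_bigr => x xX.
  rewrite bfZr // (gen_formula _ x'a (HdR x xX) y'b); ring.
have := free_coef fXR Z0 x0X => /eqP; rewrite mulf_eq0 => /orP [|/eqP //].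
by case: bt => nz _ _; rewrite (negPf (nz _ _)).
Qed.

End Tensor.
Unset Implicit Arguments. Set Strict Implicit.

Theorem mainTheorem7 (k : fieldType) (A B : zmodType)
  (R S : falgType k) (GR : A -> {vspace R}) (GS : B -> {vspace S})
  (FR : R -> R -> k) (FS : S -> S -> k) (t : A -> B -> k)
  (sigR : A) (sigS : B) (nuR : 'End(R)) (nuS : 'End(S)) :
  graded_alg GR -> graded_alg GS ->
  frobenius_form FR -> frobenius_form FS ->
  bicharacter t ->
  (forall a a' (r r' : R), r \in GR a -> r' \in GR a' ->
     FR r r' != 0 -> a + a' + sigR = 0) ->
  (forall b b' (s s' : S), s \in GS b -> s' \in GS b' ->
     FS s s' != 0 -> b + b' + sigS = 0) ->
  nakayama FR nuR -> diagonalisable nuR ->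
  nakayama FS nuS -> diagonalisable nuS ->
  forall F : tensorT R S -> tensorT R S -> k,
  bilinear_form F ->
  (forall a a' b b' (r r' : R) (s s' : S),
     r \in GR a -> r' \in GR a' -> s \in GS b -> s' \in GS b' ->
     F (tens r s) (tens r' s') = t a' b * FR r r' * FS s s') ->
  (exists nu : 'End(tensorT R S), nakayama F nu) /\
  (forall nu : 'End(tensorT R S), nakayama F nu -> diagonalisable nu).
Proof.
move=> gR gS fR fS bt hR hS nR dR nS dS F bF hF.
have [XR [fXR sXR hXR]] := homog_eigbasis gR fR hR nR dR.
have [XS [fXS sXS hXS]] := homog_eigbasis gS fS hS nS dS.
have [Y [sYT fY eY]] := extract_basis [seq tens x y | x <- XR, y <- XS].
have sY : (<<Y>> = fullv)%VS.
  by rewrite eY; apply: (tens_span (XR := XR) (XS := XS)).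
have [cf Hcf] : exists cf : tensorT R S -> k,
    forall v, v \in Y -> forall w, F v w = F w (cf v *: v).
  apply: (@seq_choice _ _ 0 (fun v c => forall w, F v w = F w (c *: v)) Y).
  move=> v /sYT /allpairsP [[x y] /= [xX yX ->]].
  by eapply eigen_tens; eassumption.
split.
  exists (linfun (diagf Y cf)) => z w; move: z w.
  apply: (span_ind (P := fun z => forall w, F z w = F w (linfun (diagf Y cf) z)) sY).
  - by move=> w; rewrite linear0 bf0l // bf0r.
  - by move=> u v hu hv w; rewrite linearD bfDl // bfDr // hu hv.
  - by move=> c v hv w; rewrite linearZ bfZl // bfZr // hv.
  by move=> v vY w; rewrite lfunE /= diagf_free // Hcf.
move=> nu hnu; exists Y; split; first by rewrite /basis_of sY eqxx fY.
move=> v vY; exists (cf v); apply/eqP; rewrite -subr_eq0; apply/eqP.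
eapply right_nondeg; try eassumption; move=> w.
by rewrite bfBr // -hnu Hcf // subrr.
Qed.
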